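(* Let $r\ge 2$ and let $S$ be a general position set of the glued binary tree $GT(r)$. If $|S\cap V_r^{(1)}|\ge 2$, then to each vertex $v\in S\cap V_r^{(1)}$ one can assign a pair of quasi-leaves belonging to $T_v$ and not belonging to $S$, in such a way that the pairs assigned to distinct vertices of $S\cap V_r^{(1)}$ are pairwise disjoint.
   Context: A perfect binary tree of depth $r\ge1$ is a rooted tree in which every non-leaf vertex has exactly $2$ children and all leaves have depth $r$. The glued binary tree $GT(r)$ is obtained from two copies $T_r^{(1)}$ and $T_r^{(2)}$ of the perfect binary tree of depth $r$ by pairwise identifying their leaves (via a fixed isomorphism of the copies). The identified vertices are the quasi-leaves; $L(GT(r))=V(T_r^{(1)})\cap V(T_r^{(2)})$, and $V_r^{(i)}=V(T_r^{(i)})\setminus L(GT(r))$ for $i\in\{1,2\}$. For $u\in V_r^{(1)}$, $T_u$ denotes the subtree of $T_r^{(1)}$ rooted at $u$ consisting of $u$ and all its descendants (its leaves being the quasi-leaves below $u$). For $S\subseteq V(G)$, two vertices $u,v$ are $S$-positionable if every shortest $u,v$-path $P$ satisfies $V(P)\cap S\subseteq\{u,v\}$; $S$ is a general position set if every two vertices of $S$ are $S$-positionable. *)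

(* Defs.v *)
From mathcomp Require Import all_boot.
Set Implicit Arguments. Unset Strict Implicit. Unset Printing Implicit Defensive.

(* Perfect binary tree of depth r in heap numbering: nodes 1 .. 2^(r+1)-1,
   node k has children 2k and 2k+1, the leaves are 2^r .. 2^(r+1)-1.
   Vertices of GT(r):
   - inl (b, k) : non-leaf vertex with heap index k+1 of copy T_r^(1) (b = true)
                  or of copy T_r^(2) (b = false)   (k < 2^r - 1)
   - inr j      : quasi-leaf with heap index 2^r + j (shared by both copies)
   The leaves of the two copies are identified via the identity of heap
   indices (the fixed isomorphism of the copies). *)
Definition GTV (r : nat) : finType := ((bool * 'I_((2 ^ r).-1)) + 'I_(2 ^ r))%type.

Definition hidx (r : nat) (v : GTV r) : nat :=
  match v with inl (_, k) => (val k).+1 | inr j => 2 ^ r + val j end.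

Definition in_copy (r : nat) (b : bool) (v : GTV r) : bool :=
  match v with inl (c, _) => c == b | inr _ => true end.

Definition parent_of (r : nat) (u v : GTV r) : bool :=
  match u with
  | inl (b, _) => in_copy b v && ((hidx v)./2 == hidx u)
  | inr _ => false
  end.

Definition gt_adj (r : nat) : rel (GTV r) :=
  fun u v => parent_of u v || parent_of v u.

Definition shortest_path (r : nat) (u v : GTV r) (p : seq (GTV r)) : Prop :=
  [/\ path (@gt_adj r) u p, last u p = v &
      forall q, path (@gt_adj r) u q -> last u q = v -> size p <= size q].

Definition general_position (r : nat) (S : {set GTV r}) : Prop :=
  forall u v, u \in S -> v \in S ->
  forall p, shortest_path u v p ->
  forall x, x \in u :: p -> x \in S -> x = u \/ x = v.

Definition V1 (r : nat) : {set GTV r} :=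
  [set v | if v is inl (b, _) then b else false].

Definition leaf_below (r : nat) (v : GTV r) (j : 'I_(2 ^ r)) : bool :=
  [exists k : 'I_r.+1, (2 ^ r + val j) %/ 2 ^ k == hidx v].

(* Main.v *)
Require Import Defs.
From mathcomp Require Import all_boot.
From mathcomp Require zify.
From Stdlib Require Import Lia Classical IndefiniteDescription.

Lemma exp2_gt0 r : 0 < 2 ^ r. Proof. by rewrite expn_gt0. Qed.

Lemma divS2 h k : h %/ 2 ^ k.+1 = h %/ 2 %/ 2 ^ k.
Proof. by rewrite expnS divnMA. Qed.
Lemma divS2r h k : h %/ 2 ^ k.+1 = h %/ 2 ^ k %/ 2.
Proof. by rewrite expnSr divnMA. Qed.
Lemma divD2 h a b : h %/ 2 ^ (a + b) = h %/ 2 ^ a %/ 2 ^ b.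
Proof. by rewrite expnD divnMA. Qed.

Lemma L_a a b n : a.+1 + b <= n -> a + b <= n.+1.
Proof. lia. Qed.
Lemma L_c a b n : a + b <= n -> a.+1 + b <= n.+1.
Proof. lia. Qed.

Lemma L_d b n : 0 + b <= n -> 0 + b.+1 <= n.+1.
Proof. lia. Qed.

Section G.
Variable r : nat.

Lemma hidx_pos (v : GTV r) : 0 < hidx v.
Proof. by destruct v as [[b k]|j]; rewrite /= ?addn_gt0 ?exp2_gt0. Qed.

Lemma hidx_lt (v : GTV r) : hidx v < 2 ^ r.+1.
Proof.
destruct v as [[b k]|j]; rewrite ?/= /=; rewrite expnS.
- have := ltn_ord k; have := exp2_gt0 r; lia.
- have := ltn_ord j; lia.
Qed.

Definition node1 (h : nat) : GTV r :=
  match @insub nat (fun k => k < (2 ^ r).-1) _ h.-1 with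
  | Some k => inl (true, k)
  | None => inr (Ordinal (ltn_pmod (h - 2 ^ r) (exp2_gt0 r)))
  end.

Lemma node1K (x : GTV r) : in_copy true x -> node1 (hidx x) = x.
Proof.
rewrite /node1; destruct x as [[b k]|j] => /=.
- move/eqP=> ->; case: insubP => [k' _ E|]; first by congr (inl (_, _)); apply: val_inj.
  by rewrite ltn_ord.
- move=> _; case: insubP => [k' Hk _|_].
  + exfalso; move: Hk; have := exp2_gt0 r; lia.
  + congr inr; apply: val_inj => /=; rewrite addKn modn_small //.
Qed.

Lemma node1_in (h : nat) : 0 < h -> h < 2 ^ r.+1 ->
  hidx (node1 h) = h /\ in_copy true (node1 h).
Proof.
move=> h0 h1; rewrite /node1; case: insubP => [k Hk E|Hk] /=.
- split=> //; rewrite E; lia.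
- split=> //; rewrite modn_small; move: Hk h1; rewrite expnS; lia.
Qed.

Lemma node1_inl (h : nat) : 0 < h -> h < 2 ^ r ->
  exists k, node1 h = inl (true, k) /\ val k = h.-1.
Proof.
move=> h0 h1; rewrite /node1; case: insubP => [k Hk E|Hk] /=.
- by exists k.
- exfalso; move: Hk; lia.
Qed.

Lemma adj_sym (u v : GTV r) : gt_adj u v = gt_adj v u.
Proof. by rewrite /gt_adj orbC. Qed.

Lemma adj_node1 (h : nat) : 1 < h -> h < 2 ^ r.+1 ->
  gt_adj (node1 (h %/ 2)) (node1 h).
Proof.
move=> h1 h2.
have hp : 0 < h %/ 2 by rewrite divn_gt0.
have hq : h %/ 2 < 2 ^ r by rewrite ltn_divLR // -expnSr.
have [k [E Ek]] := node1_inl _ hp hq.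
have [Hh Hc] := node1_in _ (ltnW h1) h2.
apply/orP; left; rewrite E /= Hc Hh /=; apply/eqP; rewrite Ek; lia.
Qed.

Lemma adj_hidx (u v : GTV r) : gt_adj u v ->
  hidx v %/ 2 = hidx u \/ hidx u %/ 2 = hidx v.
Proof.
case/orP; rewrite /parent_of.
- by destruct u as [[b k]|j] => // /andP [_ /eqP]; rewrite -divn2 => ->; left.
- by destruct v as [[b k]|j] => // /andP [_ /eqP]; rewrite -divn2 => ->; right.
Qed.

Lemma walk_bound (q : seq (GTV r)) (x : GTV r) : path (@gt_adj r) x q ->
  exists k1 k2, [/\ hidx x %/ 2 ^ k1 = hidx (last x q) %/ 2 ^ k2,
                   0 < hidx x %/ 2 ^ k1 & k1 + k2 <= size q].
Proof.
elim: q x => [|x1 q IH] x /=.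
- move=> _; exists 0, 0; rewrite expn0 !divn1; split=> //; exact: hidx_pos.
- case/andP=> Ha /IH [k1 [k2 [E P Hs]]].
  case: (adj_hidx _ _ Ha) => H.
  + case: k1 E P Hs => [|k1] E P Hs.
    * exists 0, k2.+1; rewrite expn0 divn1 divS2r -E expn0 divn1 H.
      split; [done | exact: hidx_pos | exact: L_d Hs].
    * exists k1, k2; rewrite -H -divS2; split; [exact E | exact P | exact: L_a Hs].
  + exists k1.+1, k2; rewrite divS2 H; split; [exact E | exact P | exact: L_c Hs].
Qed.
End G.

Lemma path_iota (T : Type) (e : rel T) (f : nat -> T) m n :
  (forall i, m <= i -> i < m + n -> e (f i) (f i.+1)) ->
  path e (f m) [seq f i | i <- iota m.+1 n].
Proof.
elim: n m => [|n IH] m H //=.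
apply/andP; split.
- apply: H => //; lia.
- apply: IH => i h1 h2; apply: H; lia.
Qed.

Lemma last_iota m n : last m (iota m.+1 n) = m + n.
Proof. elim: n m => [|n IH] m /=; [lia | rewrite IH; lia]. Qed.

Lemma root_exists h : 0 < h -> exists k, h %/ 2 ^ k = 1.
Proof.
move=> h0; have /andP [l u] := trunc_log_bounds (isT : 1 < 2) h0.
exists (trunc_log 2 h); apply/eqP; rewrite eqn_leq; apply/andP; split.
- by rewrite -ltnS ltn_divLR ?exp2_gt0 // -expnS.
- by rewrite divn_gt0 ?exp2_gt0.
Qed.

Lemma div_mono h i j : i <= j -> h %/ 2 ^ j <= h %/ 2 ^ i.
Proof. move=> ij; apply: leq_div2l; [exact: exp2_gt0 | by rewrite leq_exp2l]. Qed.

Section G2.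
Variable r : nat.
Local Arguments node1 : clear implicits.

Lemma gp_tree (S : {set GTV r}) (x y z : GTV r) :
  general_position S -> x \in S -> y \in S -> z \in S ->
  in_copy true x -> in_copy true y -> in_copy true z ->
  (forall a1 a2, hidx x %/ 2 ^ a1 = hidx y %/ 2 ^ a2 -> 0 < hidx x %/ 2 ^ a1 ->
    (exists2 i, i <= a1 & hidx z = hidx x %/ 2 ^ i) \/
    (exists2 j, j <= a2 & hidx z = hidx y %/ 2 ^ j)) ->
  z = x \/ z = y.
Proof.
move=> GP xS yS zS cx cy cz Hw.
set hx := hidx x; set hy := hidx y.
pose P := fun s => [exists k : 'I_s.+1, (hx %/ 2 ^ k == hy %/ 2 ^ (s - k)) && (0 < hx %/ 2 ^ k)].
have PW : forall k1 k2, hx %/ 2 ^ k1 = hy %/ 2 ^ k2 -> 0 < hx %/ 2 ^ k1 -> P (k1 + k2).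
  move=> k1 k2 E p; apply/existsP.
  have hk : k1 < (k1 + k2).+1 by lia.
  exists (Ordinal hk) => /=; by rewrite addKn E eqxx /= -E.
have exP : exists s, P s.
  have [kx Ex] := @root_exists _ (hidx_pos r x).
  have [ky Ey] := @root_exists _ (hidx_pos r y).
  exists (kx + ky); apply: PW; by rewrite ?Ex ?Ey.
case: (ex_minnP exP) => s /existsP [k /andP [/eqP Ek Pk]] Hmin.
case: k Ek Pk => a1 a1s /= Ek Pk.
rewrite ltnS in a1s.
pose g i := if i <= a1 then hx %/ 2 ^ i else hy %/ 2 ^ (s - i).
have G0 : g 0 = hx by rewrite /g leq0n expn0 divn1.
have Gs : g s = hy.
  rewrite /g; case: ifP => h.
  - have e : a1 = s by apply/eqP; rewrite eqn_leq h a1s.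
    by rewrite -{1}e Ek e subnn expn0 divn1.
  - by rewrite subnn expn0 divn1.
have Gpos : forall i, i <= s -> 0 < g i.
  move=> i hi; rewrite /g; case: ifP => h.
  - apply: leq_trans Pk _; exact: div_mono.
  - apply: leq_trans Pk _; rewrite Ek; apply: div_mono; lia.
have Glt : forall i, g i < 2 ^ r.+1.
  move=> i; rewrite /g; case: ifP => _; (apply: leq_ltn_trans (leq_div _ _) _; exact: (hidx_lt r)).
have Gstep : forall i, i < s -> g i.+1 = g i %/ 2 \/ g i = g i.+1 %/ 2.
  move=> i hi; case: (ltnP i a1) => h.
  - left; rewrite /g h ltnW // divS2r //.
  - right; have -> : g i = hy %/ 2 ^ (s - i).
      rewrite /g; case: ifP => h2 //.
      have -> : i = a1 by apply/eqP; rewrite eqn_leq h h2.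
      by rewrite Ek.
    rewrite /g ltnNge h /= -divS2r; congr (_ %/ 2 ^ _); lia.
set p := [seq node1 r (g i) | i <- iota 1 s].
have xE : node1 r (g 0) = x by rewrite G0 node1K.
have yE : node1 r (g s) = y by rewrite Gs node1K.
have Hp : path (@gt_adj r) x p.
  rewrite -xE; apply: path_iota => i _ h; rewrite add0n in h.
  case: (Gstep i h) => E.
  - have h1 : 1 < g i.
      by rewrite -(@divn_gt0 2) // -E Gpos.
    by rewrite (adj_sym r) E; apply: (adj_node1 r).
  - have h1 : 1 < g i.+1.
      by rewrite -(@divn_gt0 2) // -E Gpos // ltnW.
    rewrite E; apply: (adj_node1 r) => //.
have Hl : last x p = y.
  by rewrite -xE /p (last_map (fun i => node1 r (g i)) _ 0) last_iota add0n.
have Hsp : shortest_path x y p.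
  split=> // q Hq Hlq.
  have [k1 [k2 [E1 E2 E3]]] := @walk_bound r q x Hq.
  rewrite Hlq in E1.
  rewrite /p size_map size_iota; apply: leq_trans E3.
  apply: Hmin; exact: PW.
have [i hi Ei] : exists2 i, i <= s & hidx z = g i.
  case: (Hw a1 (s - a1) Ek Pk) => [[i h E]|[j h E]].
  - exists i; [lia | by rewrite /g h].
  - exists (s - j); first lia.
    rewrite /g; case: ifP => h2.
    + have -> : s - j = a1 by lia.
      rewrite E Ek; congr (_ %/ 2 ^ _); lia.
    + by rewrite E; congr (_ %/ 2 ^ _); lia.
have zE : z = node1 r (g i) by rewrite -Ei node1K.
apply: (GP x y xS yS p Hsp z _ zS).
rewrite zE; case: i hi {Ei zE} => [|i] hi.
- by rewrite xE mem_head.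
- rewrite inE; apply/orP; right; apply: map_f; rewrite mem_iota; lia.
Qed.
End G2.

Lemma div_split h a b : a <= b -> h %/ 2 ^ b = h %/ 2 ^ a %/ 2 ^ (b - a).
Proof. move=> ab; by rewrite -divD2 subnKC. Qed.

Lemma below_lt y n t : 0 < n -> 0 < t -> y %/ 2 ^ t = n -> n < y.
Proof.
move=> n0 t0 E.
have y0 : 0 < y by move: n0; rewrite -E divn_gt0 ?exp2_gt0 // => /(leq_trans (exp2_gt0 t)).
rewrite -E; apply: leq_ltn_trans (div_mono y _ _ t0) _.
by rewrite expn1 ltn_Pdiv.
Qed.

Lemma sib h s1 s2 p q : h %/ 2 ^ s1 = p -> h %/ 2 ^ s2 = q -> p != q ->
  p %/ 2 = q %/ 2 -> 0 < p %/ 2 -> False.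
Proof.
wlog : s1 s2 p q / s1 <= s2.
  move=> W E1 E2 ne e2 pos; case: (leqP s1 s2) => h12.
  - exact: (W s1 s2 p q).
  - apply: (W s2 s1 q p) => //; [exact: ltnW | by rewrite eq_sym | by rewrite -e2].
move=> le E1 E2 ne e2 pos.
have ne' : s1 != s2.
  apply/negP => /eqP es; move: ne; by rewrite -E1 -E2 es eqxx.
have lt : s1 < s2 by rewrite ltn_neqAle ne' le.
have : q <= p %/ 2.
  rewrite -E2 (div_split h _ _ (ltnW lt)) E1; have := div_mono p 1 (s2 - s1); rewrite expn1; apply; by rewrite subn_gt0.
rewrite e2 => H.
have q0 : 0 < q by move: pos; rewrite e2; case: (q) => [|n] //; rewrite div0n.
by have := ltn_Pdiv (isT : 1 < 2) q0; rewrite ltnNge H.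
Qed.

Section G3.
Variable r : nat.

Definition Free (S : {set GTV r}) (v : GTV r) (L : nat) :=
  forall y, y \in S -> in_copy true y -> forall t u, 0 < t ->
    hidx y %/ 2 ^ t = hidx v -> L %/ 2 ^ u = hidx y -> False.

Definition Good (S : {set GTV r}) (v : GTV r) (p : 'I_(2 ^ r) * 'I_(2 ^ r)) :=
  [/\ p.1 != p.2, leaf_below v p.1, leaf_below v p.2,
      (inr p.1 : GTV r) \notin S & (inr p.2 : GTV r) \notin S] /\
  (Free S v (2 ^ r + p.1) /\ Free S v (2 ^ r + p.2)).

Lemma copy_inj (u v : GTV r) : in_copy true u -> in_copy true v -> hidx u = hidx v -> u = v.
Proof. move=> cu cv E; by rewrite -(node1K r u cu) -(node1K r v cv) E. Qed.

Lemma leaf_k L k : L < 2 ^ r.+1 -> 0 < L %/ 2 ^ k -> k < r.+1.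
Proof.
move=> h1; rewrite divn_gt0 ?exp2_gt0 // => h2.
by rewrite -(@ltn_exp2l 2) //; apply: leq_ltn_trans h2 h1.
Qed.

Lemma leaves q : 0 < q -> q < 2 ^ r -> exists e L1 L2,
  [/\ 0 < e, 2 ^ r <= L1 < 2 ^ r.+1, 2 ^ r <= L2 < 2 ^ r.+1, L1 != L2 &
      L1 %/ 2 ^ e = q /\ L2 %/ 2 ^ e = q].
Proof.
move=> q0 qr; have /andP [l u] := trunc_log_bounds (isT : 1 < 2) q0.
set d := trunc_log 2 q in l u.
have dr : d < r by rewrite -(@ltn_exp2l 2) //; apply: leq_ltn_trans l qr.
exists (r - d), (q * 2 ^ (r - d)), (q * 2 ^ (r - d) + (2 ^ (r - d)).-1).
have e0 : 0 < r - d by rewrite subn_gt0.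
have X2 : 2 <= 2 ^ (r - d) by rewrite -{1}(expn1 2) leq_exp2l.
have Er : 2 ^ r = 2 ^ d * 2 ^ (r - d) by rewrite -expnD subnKC // ltnW.
have Er1 : 2 ^ r.+1 = 2 * (2 ^ d * 2 ^ (r - d)) by rewrite expnS Er.
move: l u; rewrite expnS Er1 Er.
move: (2 ^ d) (2 ^ (r - d)) X2 => Y X X2 l u.
have D1 : q * X %/ X = q by rewrite mulnK // ltnW.
have D2 : (q * X + X.-1) %/ X = q.
  by rewrite divnMDl ?(ltnW X2) // divn_small ?addn0 // prednK // ltnW.
split=> //.
- apply/andP; split; first by rewrite leq_mul2r l orbT.
  nia.
- apply/andP; split; first by apply: leq_trans (leq_addr _ _); rewrite leq_mul2r l orbT.
  nia.
- apply/negP => /eqP E; have : X.-1 = 0 by lia. lia.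
Qed.
End G3.

Arguments Free {r}.
Arguments Good {r}.
Arguments copy_inj {r}.
Arguments leaf_k {r}.
Arguments leaves {r}.

Section G4.
Variable r : nat.

Lemma good_of (S : {set GTV r}) (v : GTV r) L1 L2 e1 e2 :
  2 ^ r <= L1 < 2 ^ r.+1 -> 2 ^ r <= L2 < 2 ^ r.+1 -> L1 != L2 ->
  0 < e1 -> 0 < e2 -> L1 %/ 2 ^ e1 = hidx v -> L2 %/ 2 ^ e2 = hidx v ->
  Free S v L1 -> Free S v L2 -> exists p, Good S v p.
Proof.
move=> /andP [a1 b1] /andP [a2 b2] ne p1 p2 E1 E2 F1 F2.
have o1 : L1 - 2 ^ r < 2 ^ r by move: b1; rewrite expnS; lia.
have o2 : L2 - 2 ^ r < 2 ^ r by move: b2; rewrite expnS; lia.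
have K1 : 2 ^ r + (L1 - 2 ^ r) = L1 by rewrite subnKC.
have K2 : 2 ^ r + (L2 - 2 ^ r) = L2 by rewrite subnKC.
have hv := hidx_pos r v.
have lb : forall (j : 'I_(2 ^ r)) e, 2 ^ r + j < 2 ^ r.+1 -> (2 ^ r + j) %/ 2 ^ e = hidx v ->
   leaf_below v j.
  move=> j e h E; apply/existsP.
  have he : e < r.+1 by apply: (leaf_k _ _ h); rewrite E.
  by exists (Ordinal he); rewrite /= E.
have ns : forall (j : 'I_(2 ^ r)) e L, 2 ^ r + j = L -> 0 < e -> L %/ 2 ^ e = hidx v ->
   Free S v L -> (inr j : GTV r) \notin S.
  move=> j e L EL e0 E F; apply/negP => jS.
  by apply: (F (inr j) jS isT e 0 e0); rewrite /= EL // expn0 divn1.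
exists (Ordinal o1, Ordinal o2) => /=; split; last by rewrite K1 K2.
split.
- apply/negP => /eqP [] E; move: ne; by rewrite -K1 -K2 E eqxx.
- by apply: (lb _ e1); rewrite /= K1.
- by apply: (lb _ e2); rewrite /= K2.
- exact: (ns _ e1 L1).
- exact: (ns _ e2 L2).
Qed.

Lemma disj_leaf (S : {set GTV r}) (v w : GTV r) (a b : 'I_(2 ^ r)) :
  v \in S -> w \in S -> in_copy true v -> in_copy true w -> v != w ->
  leaf_below v a -> Free S v (2 ^ r + a) ->
  leaf_below w b -> Free S w (2 ^ r + b) -> a != b.
Proof.
move=> vS wS cv cw ne /existsP [s /eqP Es] Fv /existsP [t /eqP Et] Fw.
apply/negP => /eqP ab; subst b.
move: Es Et Fv Fw; set L := 2 ^ r + a => Es Et Fv Fw.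
case: (ltngtP s t) => st.
- apply: (Fw v vS cv (t - s) s); first by rewrite subn_gt0.
  + by rewrite -Es -div_split // ltnW.
  + exact: Es.
- apply: (Fv w wS cw (s - t) t); first by rewrite subn_gt0.
  + by rewrite -Et -div_split // ltnW.
  + exact: Et.
- move: ne; have -> : v = w by apply: copy_inj => //; rewrite -Es -Et st.
  by rewrite eqxx.
Qed.
End G4.

Arguments Free {r}.
Arguments Good {r}.
Arguments copy_inj {r}.
Arguments leaf_k {r}.
Arguments leaves {r}.

Section G5.
Variable r : nat.

Lemma V1P (v : GTV r) : v \in V1 r -> exists k, v = inl (true, k).
Proof. rewrite inE; destruct v as [[b k]|j] => //= hb; exists k; by rewrite hb. Qed.

Lemma exists_good (S : {set GTV r}) (v w : GTV r) : 2 <= r -> general_position S ->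
  v \in S :&: V1 r -> w \in S :&: V1 r -> w != v -> exists p, Good S v p.
Proof.
move=> r2 GP /setIP [vS /V1P [kv Ev]] /setIP [wS /V1P [kw Ew]] nwv.
have cv : in_copy true v by rewrite Ev /=.
have cw : in_copy true w by rewrite Ew /=.
set n := hidx v.
have n0 : 0 < n := hidx_pos r v.
have nr : n < 2 ^ r.
  rewrite /n Ev /=; have := ltn_ord kv; have := exp2_gt0 r; lia.
have wr : hidx w < 2 ^ r.
  rewrite Ew /=; have := ltn_ord kw; have := exp2_gt0 r; lia.
case: (classic (exists t, hidx w %/ 2 ^ t = n)) => [[t Et]|NA].
-
  have t0 : 0 < t.
    case: t Et => [|t] // Et; move: nwv; rewrite expn0 divn1 in Et.
    by rewrite (copy_inj w v cw cv Et) eqxx.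
  set c := hidx w %/ 2 ^ t.-1.
  have cn : c %/ 2 = n by rewrite /c -divS2r prednK.
  have cle : c <= hidx w := leq_div _ _.
  pose c' := n * 2 + ~~ odd c.
  have cE : c = n * 2 + odd c by rewrite -cn -modn2 -divn_eq.
  have c'n : c' %/ 2 = n by rewrite divnMDl // divn_small ?addn0 //; case: (odd c).
  have c'c : c' != c by rewrite /c' {2}cE eqn_add2l; case: (odd c).
  have c'0 : 0 < c' %/ 2 by rewrite c'n.
  have c'lt : c' < 2 ^ r.
    have : n * 2 < 2 ^ r by apply: (leq_ltn_trans _ wr); apply: (leq_trans _ cle); rewrite {1}cE leq_addr.
    case: r r2 {GP S vS wS kv kw Ev Ew cv cw nr wr Et nwv} => [|r'] // _; rewrite expnS.
    rewrite /c'; move: (2 ^ r') (~~ odd c) => X b; case: b; lia.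
  have c'gt : n < c' by rewrite /c'; lia.
  have C2 : forall y, y \in S -> in_copy true y -> forall u, hidx y %/ 2 ^ u = c' -> False.
    move=> y yS cy u Eu.
    have := @gp_tree r S w y v GP wS yS vS cw cy cv.
    case.
    + move=> a1 a2 Ea Pa; left; exists t; last by rewrite Et.
      rewrite leqNgt; apply/negP => lt.
      have lt' : a1 <= t.-1 by rewrite -ltnS prednK.
      have Ec : hidx y %/ 2 ^ (a2 + (t.-1 - a1)) = c.
        by rewrite divD2 -Ea -divD2 /c subnKC.
      apply: (sib _ _ _ _ _ Ec Eu); [by rewrite eq_sym | by rewrite cn c'n | by rewrite cn].
    + by move=> E; move: nwv; rewrite E eqxx.
    + move=> E; have : hidx y %/ 2 ^ u <= hidx y := leq_div _ _.
      by rewrite Eu -E -/n leqNgt c'gt.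
  have [e [L1 [L2 [e0 B1 B2 ne [E1 E2]]]]] := leaves c' (leq_ltn_trans (leq0n _) c'gt) c'lt.
  have FL : forall L, L %/ 2 ^ e = c' -> Free S v L.
    move=> L EL y yS cy t' u t'0 Ey Eu.
    case: (leqP u e) => ue.
    + apply: (C2 y yS cy (e - u)); by rewrite -Eu -div_split.
    + have : hidx y <= n.
        rewrite -Eu (div_split L _ _ (ltnW ue)) EL -c'n.
        have := div_mono c' 1 (u - e); rewrite expn1; apply; by rewrite subn_gt0.
      by rewrite leqNgt (below_lt _ _ _ n0 t'0 Ey).
  apply: (good_of r S v L1 L2 e.+1 e.+1 B1 B2 ne) => //.
  + by rewrite divS2r E1.
  + by rewrite divS2r E2.
  + exact: FL.
  + exact: FL.
-
  have C1 : forall y, y \in S -> in_copy true y -> forall t, 0 < t -> hidx y %/ 2 ^ t = n -> False.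
    move=> y yS cy t t0 Et.
    have := @gp_tree r S w y v GP wS yS vS cw cy cv.
    case.
    + move=> a1 a2 Ea Pa; right; exists t => //.
      rewrite leqNgt; apply/negP => lt; apply: NA.
      exists (a1 + (t - a2)); by rewrite divD2 Ea -divD2 subnKC // ltnW.
    + by move=> E; move: nwv; rewrite E eqxx.
    + move=> E; have := below_lt _ _ _ n0 t0 Et; by rewrite -E ltnn.
  have [e [L1 [L2 [e0 B1 B2 ne [E1 E2]]]]] := leaves n n0 nr.
  have FL : forall L, Free S v L.
    move=> L y yS cy t' u t'0 Ey _; exact: (C1 y yS cy t' t'0 Ey).
  exact: (good_of r S v L1 L2 e e B1 B2 ne e0 e0 E1 E2 (FL _) (FL _)).
Qed.
End G5.

Arguments Free {r}.
Arguments Good {r}.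

Theorem mainTheorem6 (r : nat) (S : {set GTV r}) :
  2 <= r -> general_position S -> 2 <= #|S :&: V1 r| ->
  exists f : GTV r -> 'I_(2 ^ r) * 'I_(2 ^ r),
    (forall v, v \in S :&: V1 r ->
       [/\ (f v).1 != (f v).2,
           leaf_below v (f v).1, leaf_below v (f v).2,
           (inr (f v).1 : GTV r) \notin S & (inr (f v).2 : GTV r) \notin S]) /\
    (forall v w, v \in S :&: V1 r -> w \in S :&: V1 r -> v != w ->
       [disjoint [:: (f v).1; (f v).2] & [:: (f w).1; (f w).2]]).
Proof.
move=> r2 GP cardM.
have ex : forall v, exists p, v \in S :&: V1 r -> Good S v p.
  move=> v; case vM: (v \in S :&: V1 r).
  - have : 0 < #|(S :&: V1 r) :\ v|.
      move: cardM; rewrite (cardsD1 v) vM add1n ltnS //.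
    case/card_gt0P => w; rewrite in_setD1 => /andP [nwv wM].
    have [p Hp] := exists_good r S v w r2 GP vM wM nwv.
    by exists p.
  - by exists (Ordinal (exp2_gt0 r), Ordinal (exp2_gt0 r)).
have [f Hf] := functional_choice _ ex.
exists f; split.
- by move=> v /Hf [].
- move=> v w vM wM nvw.
  have [[_ lv1 lv2 _ _] [Fv1 Fv2]] := Hf v vM.
  have [[_ lw1 lw2 _ _] [Fw1 Fw2]] := Hf w wM.
  move: vM wM => /setIP [vS /V1P [kv Ev]] /setIP [wS /V1P [kw Ew]].
  have cv : in_copy true v by rewrite Ev.
  have cw : in_copy true w by rewrite Ew.
  have D := disj_leaf r S v w _ _ vS wS cv cw nvw.
  rewrite disjoint_has /= !inE !negb_or.
  by rewrite !D.
Qed.
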